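(* Let $k\ge 2$ and $G=\Theta(2,2,2k)$ with end vertices $u$ and $v$. Let $L$ be a $3$-assignment for $G$ such that $L(u)\ne L(v)$. Then $P(G,L)\ge P(G,3)$.
   Context: $\Theta(l_1,l_2,l_3)$ denotes two end vertices joined by three internally disjoint paths of lengths $l_1,l_2,l_3$. A $3$-assignment $L$ assigns to each vertex $w$ a set $L(w)$ of $3$ colors; $P(G,L)$ is the number of proper colorings $f$ of $G$ with $f(w)\in L(w)$ for all $w$. $P(G,3)$ is the number of proper colorings of $G$ with colors from $\{1,2,3\}$. *)

(* Defs.v *)
From mathcomp Require Import all_boot.
Set Implicit Arguments. Unset Strict Implicit. Unset Printing Implicit Defensive.

(* Theta graph Theta(l1,l2,l3), for l1,l2,l3 >= 1, on vertex set
   {0, ..., l1+l2+l3-2}: vertex 0 is the end vertex u, vertex 1 is the end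
   vertex v; the l1-1 internal vertices of the first path are 2, ..., l1,
   those of the second path are l1+1, ..., l1+l2-1, those of the third path
   are l1+l2, ..., l1+l2+l3-2 (each path traverses its internal vertices in
   increasing order from u to v). *)

Definition path_vs (s l : nat) : seq nat := 0 :: rcons (iota s l.-1) 1.
Definition consec (s : seq nat) : seq (nat * nat) := zip s (behead s).

Definition theta_edges (l1 l2 l3 : nat) : seq (nat * nat) :=
  consec (path_vs 2 l1) ++ consec (path_vs l1.+1 l2) ++
  consec (path_vs (l1 + l2) l3).

Definition theta_adj (l1 l2 l3 : nat) : rel nat :=
  fun x y => ((x, y) \in theta_edges l1 l2 l3) || ((y, x) \in theta_edges l1 l2 l3).

(* vertex type: (l1+l2+l3-3)+2 = l1+l2+l3-1 vertices when all li >= 1 *)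
Definition theta_V (l1 l2 l3 : nat) : finType := 'I_(l1 + l2 + l3 - 3).+2.

Definition theta_u (l1 l2 l3 : nat) : theta_V l1 l2 l3 := @Ordinal (l1 + l2 + l3 - 3).+2 0 isT.
Definition theta_v (l1 l2 l3 : nat) : theta_V l1 l2 l3 := @Ordinal (l1 + l2 + l3 - 3).+2 1 isT.

Definition theta_proper (l1 l2 l3 : nat) (C : eqType)
  (f : theta_V l1 l2 l3 -> C) : bool :=
  [forall x : theta_V l1 l2 l3, forall y : theta_V l1 l2 l3,
     theta_adj l1 l2 l3 (val x) (val y) ==> (f x != f y)].

Definition theta_Plist (l1 l2 l3 : nat) (C : finType)
  (L : theta_V l1 l2 l3 -> {set C}) : nat :=
  #|[set f : {ffun theta_V l1 l2 l3 -> C} |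
      theta_proper f && [forall x, f x \in L x]]|.

Definition theta_P3 (l1 l2 l3 : nat) : nat :=
  #|[set f : {ffun theta_V l1 l2 l3 -> 'I_3} | theta_proper f]|.

Example theta_sanity : theta_edges 2 2 4 =
  [:: (0,2); (2,1); (0,3); (3,1); (0,4); (4,5); (5,6); (6,1)].
Proof. by []. Qed.

(* Main.v *)
Require Import Defs.
From mathcomp Require Import all_boot zify.
Set Implicit Arguments. Unset Strict Implicit. Unset Printing Implicit Defensive.
Section Gen.
Variable C : finType.

Lemma sum_tuple_cons n (F : seq C -> nat) :
  \sum_(t : n.+1.-tuple C) F t = \sum_(x : C) \sum_(t : n.-tuple C) F (x :: t).
Proof.
rewrite pair_big /=.
rewrite (reindex (fun p : C * n.-tuple C => [tuple of p.1 :: p.2])) /=.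
  by apply: eq_bigr => -[x t].
exists (fun t : n.+1.-tuple C => (thead t, [tuple of behead t])).
  by move=> [x t] _ /=; congr pair; apply: val_inj.
by move=> t _; rewrite [in RHS](tuple_eta t).
Qed.

Lemma sum_tuple0 (F : seq C -> nat) :
  \sum_(t : 0.-tuple C) F t = F [::].
Proof.
rewrite (eq_bigr (fun _ => F [::])); last by move=> t _; rewrite tuple0.
by rewrite sum_nat_const card_tuple expn0 mul1n.
Qed.

Lemma sum_ffun_tuple n (G : {ffun 'I_n -> C} -> nat) :
  \sum_(f : {ffun 'I_n -> C}) G f = \sum_(t : n.-tuple C) G [ffun i => tnth t i].
Proof.
rewrite (reindex (fun t : n.-tuple C => [ffun i => tnth t i])) //.
exists (fun f : {ffun 'I_n -> C} => [tuple f i | i < n]).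
  by move=> t _; apply: eq_from_tnth => i; rewrite tnth_mktuple ffunE.
by move=> f _; apply/ffunP => i; rewrite ffunE tnth_mktuple.
Qed.

Fixpoint pcount (Lf : nat -> {set C}) (s m : nat) (c d : C) : nat :=
  if m is m'.+1 then \sum_(x in Lf s | x != c) pcount Lf s.+1 m' x d
  else (c != d).

Definition pathok (x0 : C) (Lf : nat -> {set C}) (s m : nat) (c d : C) (r : seq C) : bool :=
  path (fun a b => a != b) c (rcons r d) && all (fun i => nth x0 r i \in Lf (s + i)) (iota 0 m).

Lemma pcountE x0 Lf m : forall s c d,
  \sum_(t : m.-tuple C) pathok x0 Lf s m c d t = pcount Lf s m c d.
Proof.
elim: m => [|m IH] s c d.
  by rewrite (sum_tuple0 (fun r => nat_of_bool (pathok x0 Lf s 0 c d r))) /pathok /= !andbT.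
rewrite (@sum_tuple_cons m (fun r => nat_of_bool (pathok x0 Lf s m.+1 c d r))) /= [RHS]big_mkcond /=.
apply: eq_bigr => x _.
have E : forall t : m.-tuple C, pathok x0 Lf s m.+1 c d (x :: t) =
   ((x \in Lf s) && (x != c)) && pathok x0 Lf s.+1 m x d t.
  move=> t; rewrite /pathok /= addn0 eq_sym.
  have -> : iota 1 m = [seq 1 + i | i <- iota 0 m] by rewrite -iotaDl.
  rewrite all_map.
  have -> : all (fun i => nth x0 (x :: t) (1 + i) \in Lf (s + (1 + i))) (iota 0 m)
          = all (fun i => nth x0 t i \in Lf (s.+1 + i)) (iota 0 m).
    by apply: eq_all => i; rewrite /= add1n addSnnS.
  by case: (x != c); case: (x \in Lf s); rewrite /= ?andbF /=.
rewrite (eq_bigr _ (fun t _ => congr1 nat_of_bool (E t))).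
case: ((x \in Lf s) && (x != c)) => /=.
  by rewrite -IH.
by rewrite big1.
Qed.


Lemma card3P (A : {set C}) : #|A| = 3 ->
  exists a b c, [/\ a != b, a != c, b != c & A = [set a; b; c]].
Proof.
move=> HA; have : 0 < #|A| by rewrite HA.
case/card_gt0P => a Ha.
have : #|A :\ a| == 2 by apply/eqP; move: HA; rewrite (cardsD1 a) Ha /=; lia.
case/cards2P => b [c [Hbc E]].
have : b \in A :\ a by rewrite E !inE eqxx.
have : c \in A :\ a by rewrite E !inE eqxx orbT.
rewrite !inE => /andP[Hca _] /andP[Hba _].
exists a, b, c; split; [by rewrite eq_sym | by rewrite eq_sym | by [] | ].
apply/setP => x; move/setP: E => /(_ x); rewrite !inE.
case: (x =P a) => [->|_] /=; [by rewrite Ha | by []].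
Qed.

Lemma step3 a b c y (f : C -> nat) : a != b -> a != c -> b != c ->
  \sum_(x in [set a; b; c] | x != y) f x =
  (if a != y then f a else 0) + (if b != y then f b else 0) + (if c != y then f c else 0).
Proof.
move=> Hab Hac Hbc.
rewrite big_mkcondr /= -setUA big_setU1 /=; last by rewrite !inE negb_or Hab Hac.
rewrite big_setU1 /=; last by rewrite !inE.
by rewrite big_set1 addnA.
Qed.

Definition InvA (al : nat) (f : C -> nat) :=
  (forall y, al <= f y) /\
  (forall y1 y2 y3, y1 != y2 -> y1 != y3 -> y2 != y3 -> 3 * al + 1 <= f y1 + f y2 + f y3).
Definition InvB (al : nat) (f : C -> nat) :=
  (forall y1 y2, y1 != y2 -> 4 * al + 1 <= f y1 + f y2) /\
  (forall y1 y2 y3, y1 != y2 -> y1 != y3 -> y2 != y3 -> 6 * al + 2 <= f y1 + f y2 + f y3).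

Ltac clean := repeat match goal with
 | H : is_true (?x != ?x) |- _ => by rewrite eqxx in H
 | H : ?x <> ?x |- _ => by case: H
 | |- context [?x == ?x] => rewrite eqxx
 end.

Ltac splitall := clean; repeat (match goal with
  | |- context [?x == ?y] => case: (x =P y) => [?|?]; subst; clean
  end); rewrite /=.

Lemma stepAB al (A : {set C}) (f : C -> nat) : #|A| = 3 -> InvA al f ->
  InvB al (fun y => \sum_(x in A | x != y) f x).
Proof.
case/card3P => a [b [c [Hab Hac Hbc ->]]] [H1 H3].
have := H1 a; have := H1 b; have := H1 c; have := H3 a b c Hab Hac Hbc.
move: Hab Hac Hbc => /eqP Hab /eqP Hac /eqP Hbc.
split.
  move=> y1 y2 /eqP H12; rewrite !step3; try exact/eqP.
  splitall; lia.
move=> y1 y2 y3 /eqP H12 /eqP H13 /eqP H23; rewrite !step3; try exact/eqP.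
splitall; lia.
Qed.


Lemma stepBA al (A : {set C}) (f : C -> nat) : #|A| = 3 -> InvB al f ->
  InvA (4 * al + 1) (fun y => \sum_(x in A | x != y) f x).
Proof.
case/card3P => a [b [c [Hab Hac Hbc ->]]] [H2 H3].
have := H2 a b Hab; have := H2 a c Hac; have := H2 b c Hbc; have := H3 a b c Hab Hac Hbc.
move: Hab Hac Hbc => /eqP Hab /eqP Hac /eqP Hbc.
split.
  move=> y; rewrite !step3; try exact/eqP.
  splitall; lia.
move=> y1 y2 y3 /eqP H12 /eqP H13 /eqP H23; rewrite !step3; try exact/eqP.
splitall; lia.
Qed.

Fixpoint alpha (j : nat) : nat := if j is j'.+1 then 4 * alpha j' + 1 else 0.

Lemma pcount_inv (Lf : nat -> {set C}) d : (forall i, #|Lf i| = 3) ->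
  forall j s, InvB (alpha j) (fun y => pcount Lf s (2 * j) y d) /\
              InvA (alpha j.+1) (fun y => pcount Lf s (2 * j).+1 y d).
Proof.
move=> HL; elim=> [|j IH] s.
  have B0 : forall s', InvB (alpha 0) (fun y => pcount Lf s' (2 * 0) y d).
    move=> s'; split => /=.
      by move=> y1 y2 H12; case: (y1 =P d) => [E|]; case: (y2 =P d) => [E'|] //=;
         rewrite ?E ?E' ?eqxx in H12 *.
    move=> y1 y2 y3 H12 H13 H23.
    case: (y1 =P d) => [E|]; case: (y2 =P d) => [E'|]; case: (y3 =P d) => [E''|] //=;
      subst; rewrite ?eqxx in H12 H13 H23 * => //.
  split; first exact: B0.
  exact: (stepBA (HL s) (B0 s.+1)).
have BB : InvB (alpha j.+1) (fun y => pcount Lf s (2 * j.+1) y d).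
  rewrite mulnS /=; exact: (stepAB (HL s) (proj2 (IH s.+1))).
split; first exact: BB.
have BB' : InvB (alpha j.+1) (fun y => pcount Lf s.+1 (2 * j.+1) y d).
  rewrite mulnS /=; exact: (stepAB (HL s.+1) (proj2 (IH s.+2))).
exact: (stepBA (HL s) BB').
Qed.

End Gen.
Lemma sumI3 (f : 'I_3 -> nat) (y : 'I_3) :
  \sum_(x in [set: 'I_3] | x != y) f x + f y = \sum_(x < 3) f x.
Proof.
rewrite [RHS](bigD1 y) //= addnC; congr (_ + _).
by apply: eq_bigl => x; rewrite in_setT.
Qed.

Lemma sum_neq3 (d : 'I_3) : \sum_(x < 3) (x != d) = 2.
Proof.
rewrite (bigD1 d) //= eqxx add0n.
rewrite (eq_bigr (fun _ => 1)); last by move=> i ->.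
by rewrite sum1_card cardC1 card_ord.
Qed.

Lemma sum_eq3 (d : 'I_3) : \sum_(x < 3) (x == d) = 1.
Proof.
rewrite (bigD1 d) //= eqxx big1 // => i /negbTE ->. by [].
Qed.

Lemma pcount_full d : forall j s y,
  pcount (fun _ => [set: 'I_3]) s (2 * j) y d = 2 * alpha j + (y != d) /\
  pcount (fun _ => [set: 'I_3]) s (2 * j).+1 y d = alpha j.+1 + (y == d).
Proof.
have odd_step : forall j s y, (forall x, pcount (fun _ => [set: 'I_3]) s.+1 (2 * j) x d = 2 * alpha j + (x != d)) ->
   pcount (fun _ => [set: 'I_3]) s (2 * j).+1 y d = alpha j.+1 + (y == d).
  move=> j s y H /=.
  have H1 := sumI3 (fun x => pcount (fun _ => [set: 'I_3]) s.+1 (2 * j) x d) y.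
  have H2 : \sum_(x < 3) pcount (fun _ => [set: 'I_3]) s.+1 (2 * j) x d = 6 * alpha j + 2.
    rewrite (eq_bigr _ (fun x _ => H x)) big_split /= sum_nat_const card_ord sum_neq3; lia.
  rewrite H2 H in H1.
  by move: H1; case: (y =P d) => /= _; lia.
elim=> [|j IH] s y.
  have E0 : forall s' x, pcount (fun _ => [set: 'I_3]) s' (2 * 0) x d = 2 * alpha 0 + (x != d) by [].
  by split; [exact: E0 | apply: odd_step].
have EV : forall s' x, pcount (fun _ => [set: 'I_3]) s' (2 * j.+1) x d = 2 * alpha j.+1 + (x != d).
  move=> s' x; rewrite mulnS add2n.
  have H1 := sumI3 (fun x => pcount (fun _ => [set: 'I_3]) s'.+1 (2 * j).+1 x d) x.
  have H2 : \sum_(x < 3) pcount (fun _ => [set: 'I_3]) s'.+1 (2 * j).+1 x d = 3 * alpha j.+1 + 1.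
    rewrite (eq_bigr _ (fun x _ => proj2 (IH _ x))) big_split /= sum_nat_const card_ord sum_eq3 /=; lia.
  rewrite H2 (proj2 (IH _ x)) in H1.
  by move: H1; case: (x =P d) => /= _; lia.
by split; [exact: EV | apply: odd_step].
Qed.
Section W.
Variable C : finType.

Lemma card_sum (B : {set C}) (b : C -> bool) :
  \sum_(x in B) b x = #|[set x in B | b x]|.
Proof.
rewrite -sum1dep_card big_mkcond [RHS]big_mkcond /=.
by apply: eq_bigr => x _; case: (x \in B); case: (b x).
Qed.

Lemma sum_neq (B : {set C}) z : \sum_(x in B) (z != x) = #|B :\ z|.
Proof.
rewrite card_sum; apply: eq_card => x; rewrite !inE eq_sym andbC.
by [].
Qed.

Lemma cardD2_sum (A : {set C}) x y :
  #|A :\ x :\ y| = \sum_(z in A) ((z != x) && (z != y)).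
Proof.
rewrite card_sum; apply: eq_card => z; rewrite !inE.
by case: (z \in A); case: (z != x); case: (z != y).
Qed.

Lemma SA_bound (Lu Lv A : {set C}) : #|Lu| = 3 -> #|Lv| = 3 -> #|A| = 3 ->
  18 <= \sum_(x in Lu) \sum_(y in Lv) #|A :\ x :\ y| + 2 * #|Lu :&: Lv|.
Proof.
move=> Hu Hv HA.
have E : \sum_(x in Lu) \sum_(y in Lv) #|A :\ x :\ y| =
         \sum_(z in A) #|Lu :\ z| * #|Lv :\ z|.
  under eq_bigr => x _ do under eq_bigr => y _ do rewrite cardD2_sum.
  rewrite exchange_big /=.
  under eq_bigr => y _ do rewrite exchange_big /=.
  rewrite exchange_big /=.
  apply: eq_bigr => z _.
  rewrite -sum_neq -sum_neq [RHS]big_distrl exchange_big /=.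
  apply: eq_bigr => x _; rewrite big_distrr /=.
  by apply: eq_bigr => y _; rewrite mulnb.
rewrite E.
have I1 : \sum_(z in A) (z \in Lu :&: Lv) <= #|Lu :&: Lv|.
  by rewrite card_sum; apply: subset_leq_card; apply/subsetP => z; rewrite inE => /andP[].
have I2 : \sum_(z in A) 6 <= \sum_(z in A) (#|Lu :\ z| * #|Lv :\ z| + 2 * (z \in Lu :&: Lv)).
  apply: leq_sum => z _.
  have := cardsD1 z Lu; have := cardsD1 z Lv; rewrite Hu Hv inE.
  by case: (z \in Lu); case: (z \in Lv) => /= H1 H2; lia.
rewrite big_split /= -big_distrr /= sum_nat_const HA in I2.
lia.
Qed.

Lemma E_bound (Lu Lv : {set C}) :
  #|Lu :&: Lv| <= \sum_(x in Lu) \sum_(y in Lv) (x == y).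
Proof.
have -> : #|Lu :&: Lv| = \sum_(x in Lu) (x \in Lv).
  by rewrite card_sum; apply: eq_card => x; rewrite !inE.
apply: leq_sum => x _.
case Hx: (x \in Lv) => //.
by rewrite (bigD1 x) //= eqxx.
Qed.

Lemma I_bound (Lu Lv : {set C}) : #|Lu| = 3 -> #|Lv| = 3 -> Lu != Lv -> #|Lu :&: Lv| <= 2.
Proof.
move=> Hu Hv; apply: contraR; rewrite -ltnNge => H.
have H1 : Lu :&: Lv == Lu by rewrite eqEcard subsetIl Hu.
have H2 : Lu :&: Lv == Lv by rewrite eqEcard subsetIr Hv.
by rewrite -(eqP H1) (eqP H2).
Qed.

Lemma W21 (Lu Lv La Lb : {set C}) : #|Lu| = 3 -> #|Lv| = 3 -> #|La| = 3 -> #|Lb| = 3 ->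
  Lu != Lv ->
  21 <= \sum_(x in Lu) \sum_(y in Lv) #|La :\ x :\ y| * #|Lb :\ x :\ y|.
Proof.
move=> Hu Hv Ha Hb Huv.
have Sa := SA_bound Hu Hv Ha; have Sb := SA_bound Hu Hv Hb.
have Eb := E_bound Lu Lv; have Ib := I_bound Hu Hv Huv.
have P : \sum_(x in Lu) \sum_(y in Lv) (#|La :\ x :\ y| + #|Lb :\ x :\ y| + (x == y))
   <= \sum_(x in Lu) \sum_(y in Lv) (#|La :\ x :\ y| * #|Lb :\ x :\ y| + 1).
  apply: leq_sum => x _; apply: leq_sum => y _.
  have HA := cardsD1 x La; have HA' := cardsD1 y (La :\ x).
  have HB := cardsD1 x Lb; have HB' := cardsD1 y (Lb :\ x).
  rewrite Ha in HA; rewrite Hb in HB.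
  move: HA' HB'; rewrite !inE.
  case: (x =P y) => [<-|_] /=; rewrite ?eqxx /=; nia.
have S9 : \sum_(x in Lu) \sum_(y in Lv) 1 = 9.
  by under eq_bigr => x _ do rewrite sum_nat_const Hv; rewrite sum_nat_const Hu.
have L1 : \sum_(x in Lu) \sum_(y in Lv) (#|La :\ x :\ y| + #|Lb :\ x :\ y| + (x == y)) =
  \sum_(x in Lu) \sum_(y in Lv) #|La :\ x :\ y| + \sum_(x in Lu) \sum_(y in Lv) #|Lb :\ x :\ y|
  + \sum_(x in Lu) \sum_(y in Lv) (x == y).
  by rewrite -!big_split; apply: eq_bigr => x _; rewrite -!big_split.
have R1 : \sum_(x in Lu) \sum_(y in Lv) (#|La :\ x :\ y| * #|Lb :\ x :\ y| + 1) =
  \sum_(x in Lu) \sum_(y in Lv) (#|La :\ x :\ y| * #|Lb :\ x :\ y|) + 9.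
  by rewrite -S9 -!big_split; apply: eq_bigr => x _; rewrite -!big_split.
move: P; rewrite L1 R1.
lia.
Qed.

End W.
Definition Eseq (m : nat) : seq (nat * nat) :=
  [:: (0,2); (2,1); (0,3); (3,1)] ++ consec (0 :: rcons (iota 4 m) 1).

Lemma all_zip (T : Type) (P : pred T) (s t : seq T) :
  all P s -> all P t -> all (fun p => P p.1 && P p.2) (zip s t).
Proof.
elim: s t => [|x s IH] [|y t] //= /andP[Px Ps] /andP[Py Pt].
by rewrite Px Py IH.
Qed.

Lemma Eseq_bound m : all (fun p => (p.1 < m.+4) && (p.2 < m.+4)) (Eseq m).
Proof.
rewrite /Eseq all_cat /=. rewrite /consec.
apply: (all_zip (P := fun i => i < m.+4)).
  rewrite /= all_rcons /=; apply/allP => i; rewrite mem_iota; lia.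
rewrite /= all_rcons /=; apply/allP => i; rewrite mem_iota; lia.
Qed.

Section Main.
Variable C : finType.

Lemma all_zip_path (g : nat -> C) (x : nat) (s : seq nat) :
  all (fun p => g p.1 != g p.2) (zip (x :: s) s) = path (fun a b => a != b) (g x) (map g s).
Proof. by elim: s x => [|y s IH] x //=; rewrite IH. Qed.

Lemma adj_conv m (x0 : C) (t : seq C) (f : 'I_m.+4 -> C) (Hf : forall i, f i = nth x0 t i) :
  [forall x : 'I_m.+4, forall y : 'I_m.+4,
     (((val x, val y) \in Eseq m) || ((val y, val x) \in Eseq m)) ==> (f x != f y)]
  = all (fun p => nth x0 t p.1 != nth x0 t p.2) (Eseq m).
Proof.
have B := Eseq_bound m.
apply/idP/idP.
  move/forallP => H; apply/allP => -[a b] Hab.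
  have /andP[Ha Hb] := allP B _ Hab.
  have := forallP (H (Ordinal Ha)) (Ordinal Hb).
  by rewrite /= Hab /= !Hf.
move/allP => H; apply/forallP => x; apply/forallP => y; apply/implyP.
rewrite !Hf.
by case/orP => /H //=; rewrite eq_sym.
Qed.

Lemma list_conv m (x0 : C) (L : 'I_m.+4 -> {set C}) (t : seq C) (f : 'I_m.+4 -> C) (Hf : forall i, f i = nth x0 t i) :
  [forall x, f x \in L x] = all (fun i => nth x0 t i \in L (inord i)) (iota 0 m.+4).
Proof.
apply/forallP/allP.
  move=> H i; rewrite mem_iota add0n => /andP[_ Hi].
  have := H (Ordinal Hi); rewrite Hf /=.
  by have -> : inord i = Ordinal Hi :> 'I_m.+4 by apply: val_inj; rewrite /= inordK.
move=> H x; rewrite Hf.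
have := H (val x); rewrite inord_val; apply.
by rewrite mem_iota add0n ltn_ord.
Qed.

End Main.

Section Dec.
Variable C : finType.

Definition Gseq m (x0 : C) (Lf : nat -> {set C}) (s : seq C) : bool :=
  all (fun p => nth x0 s p.1 != nth x0 s p.2) (Eseq m) &&
  all (fun i => nth x0 s i \in Lf i) (iota 0 m.+4).

Lemma Gseq_cons m x0 Lf (c0 c1 c2 c3 : C) (r : seq C) : size r = m ->
  Gseq m x0 Lf [:: c0, c1, c2, c3 & r] =
  [&& c0 \in Lf 0, c1 \in Lf 1, c2 \in Lf 2 :\ c0 :\ c1, c3 \in Lf 3 :\ c0 :\ c1
    & pathok x0 Lf 4 m c0 c1 r].
Proof.
move=> Hr.
have Em : [seq nth x0 [:: c0, c1, c2, c3 & r] i | i <- iota 4 m] = r.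
  rewrite (iotaDl 4 0) -map_comp.
  rewrite (eq_map (g := nth x0 r)); last by move=> i.
  by rewrite -Hr -/(mkseq _ _) mkseq_nth.
rewrite /Gseq /Eseq all_cat /consec /= all_zip_path map_rcons Em /=.
rewrite /pathok (iotaDl 4 0) all_map.
have -> : all (preim (addn 4) (fun i => nth x0 [:: c0, c1, c2, c3 & r] i \in Lf i)) (iota 0 m)
        = all (fun i => nth x0 r i \in Lf (4 + i)) (iota 0 m) by apply: eq_all => i.
rewrite !inE ![c0 == _]eq_sym.
case: (c0 \in Lf 0); case: (c1 \in Lf 1); case: (c2 \in Lf 2); case: (c3 \in Lf 3);
case: (c2 == c0); case: (c2 == c1); case: (c3 == c0); case: (c3 == c1); case: (path _ _ _); by rewrite /= ?andbF.
Qed.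


Lemma sum3_factor (T1 T2 T3 : finType) (A : nat) (B : T1 -> nat) (D : T2 -> nat) (P : T3 -> nat) :
  \sum_i \sum_j \sum_k (A * (B i * (D j * P k))) = A * (\sum_i B i) * (\sum_j D j) * (\sum_k P k).
Proof.
transitivity (A * \sum_i \sum_j \sum_k (B i * (D j * P k))).
  rewrite big_distrr /=; apply: eq_bigr => i _; rewrite big_distrr /=.
  by apply: eq_bigr => j _; rewrite big_distrr.
rewrite -!mulnA; congr (A * _).
rewrite big_distrl /=; apply: eq_bigr => i _.
rewrite big_distrl big_distrr /=; apply: eq_bigr => j _.
by rewrite -!big_distrr.
Qed.

Lemma card_as_sum (B : {set C}) : #|B| = \sum_x (x \in B).
Proof. by rewrite -sum1_card big_mkcond; apply: eq_bigr => x _; case: (x \in B). Qed.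

Lemma decomp n m (e : n = m.+2) (adj : rel nat)
  (Hadj : forall x y, adj x y = ((x, y) \in Eseq m) || ((y, x) \in Eseq m))
  (L : 'I_n.+2 -> {set C}) (x0 : C) :
  #|[set f : {ffun 'I_n.+2 -> C} |
      [forall x, forall y, adj (val x) (val y) ==> (f x != f y)] && [forall x, f x \in L x]]|
  = \sum_(c0 in L (inord 0)) \sum_(c1 in L (inord 1))
      (#|L (inord 2) :\ c0 :\ c1| * #|L (inord 3) :\ c0 :\ c1| *
       pcount (fun i => L (inord i)) 4 m c0 c1).
Proof.
subst n.
set Lf := fun i => L (inord i).
transitivity (\sum_(t : m.+4.-tuple C) nat_of_bool (Gseq m x0 Lf t)).
  rewrite -sum1dep_card big_mkcond /= sum_ffun_tuple.
  apply: eq_bigr => t _.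
  have Hf : forall i, [ffun i => tnth t i] i = nth x0 t i by move=> i; rewrite ffunE (tnth_nth x0).
  have -> : [forall x, forall y, adj (val x) (val y) ==> ([ffun i => tnth t i] x != [ffun i => tnth t i] y)]
     = [forall x : 'I_m.+4, forall y : 'I_m.+4,
     (((val x, val y) \in Eseq m) || ((val y, val x) \in Eseq m)) ==> ([ffun i => tnth t i] x != [ffun i => tnth t i] y)].
    by apply: eq_forallb => x; apply: eq_forallb => y; rewrite Hadj.
  rewrite (adj_conv Hf) (list_conv L Hf) /Gseq.
  by case: (_ && _).
rewrite (@sum_tuple_cons _ m.+3 (fun s => nat_of_bool (Gseq m x0 Lf s))).
rewrite [RHS]big_mkcond; apply: eq_bigr => c0 _.
rewrite (@sum_tuple_cons _ m.+2 (fun s => nat_of_bool (Gseq m x0 Lf (c0 :: s)))).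
rewrite -mulnbl big_distrr /= [RHS]big_mkcond /=; apply: eq_bigr => c1 _.
rewrite (@sum_tuple_cons _ m.+1 (fun s => nat_of_bool (Gseq m x0 Lf [:: c0, c1 & s]))).
under eq_bigr => c2 _ do
  rewrite (@sum_tuple_cons _ m (fun s => nat_of_bool (Gseq m x0 Lf [:: c0, c1, c2 & s]))).
under eq_bigr => c2 _ do under eq_bigr => c3 _ do under eq_bigr => r _ do
  rewrite (Gseq_cons _ _ _ _ _ _ (size_tuple r)) -!mulnb mulnA.
rewrite sum3_factor -(pcountE x0) !card_as_sum -mulnbl.
rewrite /Lf.
rewrite /pathok; under [X in _ = _ * (_ * (_ * X))]eq_bigr => t _ do rewrite -mulnb.
lia.
Qed.

End Dec.

Lemma alpha_ge k : 2 <= k -> 5 <= alpha k.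
Proof. by case: k => [|[|j]] //= _; lia. Qed.

Lemma sumI3b (c0 : 'I_3) (F : bool -> nat) :
  \sum_(c1 in [set: 'I_3]) F (c0 == c1) = F true + 2 * F false.
Proof.
rewrite (eq_bigl (fun _ => true)); last by move=> x; rewrite in_setT.
rewrite !big_ord_recl big_ord0.
have E : forall i j : 'I_3, (i == j) = (val i == val j) by [].
case: c0 => [[|[|[|]]] H] //=; rewrite !E /= /bump /= ?addn0 ?add1n /= !eqE /=; lia.
Qed.

Lemma cardT3 (c0 c1 : 'I_3) : #|[set: 'I_3] :\ c0 :\ c1| = if c0 == c1 then 2 else 1.
Proof.
have H1 := cardsD1 c0 [set: 'I_3]; have H2 := cardsD1 c1 ([set: 'I_3] :\ c0).
rewrite cardsT card_ord in_setT in H1; rewrite !inE in H2.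
move: H1 H2; rewrite eq_sym; case: (c0 == c1) => /= A B; rewrite B in A; move: A; set X := #|_ :\ c1|; lia.
Qed.

Theorem lemma21 (k : nat) (C : finType) (L : theta_V 2 2 (2 * k) -> {set C}) :
  2 <= k ->
  (forall w, #|L w| = 3) ->
  L (theta_u 2 2 (2 * k)) != L (theta_v 2 2 (2 * k)) ->
  theta_P3 2 2 (2 * k) <= theta_Plist L.
Proof.
move=> Hk H3 Huv.
set m := (2 * k).-1.
have e : 2 + 2 + 2 * k - 3 = m.+2 by rewrite /m; lia.
have Hadj : forall x y, theta_adj 2 2 (2 * k) x y = ((x, y) \in Eseq m) || ((y, x) \in Eseq m)
  by [].
have [x0 _] : exists x, x \in L (theta_u 2 2 (2 * k)) by apply/card_gt0P; rewrite H3.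
have D1 := decomp e Hadj L x0.
have D3 := decomp e Hadj (fun _ : theta_V 2 2 (2 * k) => [set: 'I_3]) ord0.
have Hm : m = (2 * k.-1).+1 by rewrite /m; lia.
have al5 := alpha_ge Hk.
have Hak : alpha k = alpha (k.-1).+1 by case: k Hk {m e Hm D1 D3 L H3 Huv x0 al5 Hadj}.
have P3E : theta_P3 2 2 (2 * k) = 18 * alpha k + 12.
  rewrite /theta_P3 /theta_proper.
  have -> : forall P : pred {ffun theta_V 2 2 (2 * k) -> 'I_3},
      #|[set f | P f]| = #|[set f | P f && [forall x, f x \in (fun _ : theta_V 2 2 (2 * k) => [set: 'I_3]) x]]|.
    move=> P; apply: eq_card => f; rewrite !inE.
    rewrite (_ : [forall x, _] = true) ?andbT //; by apply/forallP => x; rewrite in_setT.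
  rewrite D3 /=.
  under eq_bigr => c0 _ do under eq_bigr => c1 _ do
    rewrite cardT3 Hm (proj2 (pcount_full c1 k.-1 4 c0)) -Hak.
  under eq_bigr => c0 _ do rewrite (sumI3b c0 (fun b => (if b then 2 else 1) * (if b then 2 else 1) * (alpha k + b))) /=.
  rewrite sum_nat_const cardsT card_ord; lia.
rewrite P3E /theta_Plist /theta_proper D1.
have HL : forall i, #|(fun i => L (inord i)) i| = 3 by move=> i; exact: H3.
have Hu : inord 0 = theta_u 2 2 (2 * k) by apply: val_inj; rewrite /= inordK.
have Hv : inord 1 = theta_v 2 2 (2 * k) by apply: val_inj; rewrite /= inordK.
have W := W21 (H3 (inord 0)) (H3 (inord 1)) (H3 (inord 2)) (H3 (inord 3)) ltac:(by rewrite Hu Hv).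
apply: leq_trans (_ : 21 * alpha k <= _); first lia.
apply: leq_trans (_ : (\sum_(c0 in L (inord 0)) \sum_(c1 in L (inord 1))
    #|L (inord 2) :\ c0 :\ c1| * #|L (inord 3) :\ c0 :\ c1|) * alpha k <= _).
  by rewrite leq_mul2r W orbT.
rewrite big_distrl /=; apply: leq_sum => c0 _; rewrite big_distrl /=; apply: leq_sum => c1 _.
apply: leq_mul => //.
rewrite Hm Hak.
exact: (proj1 (proj2 (pcount_inv c1 HL k.-1 4)) c0).
Qed.
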